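(* In the algebra $\mathcal{B}_d$, for any nonnegative integers $a,b$ with $a+b=d+1$, $$f^a\binom{H_2}{b}=0=\binom{H_2}{b}e^a,\qquad e^a\binom{H_1}{b}=0=\binom{H_1}{b}f^a.$$ In particular $e^{d+1}=0=f^{d+1}$ in $\mathcal{B}_d$.
   Context: Fix an integer $d\ge 0$. $\mathcal{B}_d$ is the associative $\mathbb{Q}$-algebra with $1$ generated by $e,f,H_1,H_2$ subject to the relations $H_1H_2=H_2H_1$, $H_1e-eH_1=e$, $H_1f-fH_1=-f$, $H_2e-eH_2=-e$, $H_2f-fH_2=f$, $ef-fe=H_1-H_2$, $H_1+H_2=d$, and $H_1(H_1-1)\cdots(H_1-d)=0$. For an element $T$ and integer $m\ge 0$, $\binom{T}{m}=T(T-1)\cdots(T-m+1)/m!$. *)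

(* Defs.v *)
From mathcomp Require Import all_boot all_order all_algebra.
Set Implicit Arguments. Unset Strict Implicit. Unset Printing Implicit Defensive.
Import GRing.Theory.
Local Open Scope ring_scope.

Definition binom (A : algType rat) (T : A) (m : nat) : A :=
  ((m`!)%:R : rat)^-1 *: \prod_(i < m) (T - i%:R).

Definition B_rels (d : nat) (A : algType rat) (e f H1 H2 : A) : Prop :=
  H1 * H2 = H2 * H1 /\
  H1 * e - e * H1 = e /\
  H1 * f - f * H1 = - f /\
  H2 * e - e * H2 = - e /\
  H2 * f - f * H2 = f /\
  e * f - f * e = H1 - H2 /\
  H1 + H2 = d%:R /\
  \prod_(i < d.+1) (H1 - i%:R) = 0.

(* Main.v *)
Require Import Defs.
From mathcomp Require Import all_boot all_order all_algebra.
Import GRing.Theory Num.Theory.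
Local Open Scope ring_scope.

Section S.
Variable A : algType rat.

Lemma eig_left (H z : A) (r : rat) n : H * z = r *: z ->
  \prod_(i < n) (H - i%:R) * z = (\prod_(i < n) (r - i%:R)) *: z.
Proof.
move=> hz; elim: n => [|n IH]; first by rewrite !big_ord0 mul1r scale1r.
rewrite !big_ord_recr /= -mulrA mulrBl hz mulr_natl -scaler_nat -scalerBl.
by rewrite -scalerAr IH scalerA mulrC.
Qed.

Lemma eig_right (H z : A) (r : rat) n : z * H = r *: z ->
  z * \prod_(i < n) (H - i%:R) = (\prod_(i < n) (r - i%:R)) *: z.
Proof.
move=> hz; elim: n => [|n IH]; first by rewrite !big_ord0 mulr1 scale1r.
rewrite !big_ord_recr /= mulrA IH -scalerAl mulrBr hz mulr_natr -scaler_nat -scalerBl.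
by rewrite scalerA.
Qed.

Lemma prod_nz d : \prod_(i < d.+1) ((d.+1)%:R - i%:R : rat) != 0.
Proof.
apply/prodf_neq0 => i _; rewrite subr_eq0 eqr_nat.
by apply/negP => /eqP hi; have := ltn_ord i; rewrite -hi ltnn.
Qed.

Lemma kill_l (H z : A) d : \prod_(i < d.+1) (H - i%:R) = 0 ->
  H * z = (d.+1)%:R *: z -> z = 0.
Proof.
move=> hP hz; have := @eig_left _ _ _ d.+1 hz; rewrite hP mul0r => /esym/eqP.
by rewrite scaler_eq0 (negbTE (prod_nz d)) /= => /eqP.
Qed.

Lemma kill_r (H z : A) d : \prod_(i < d.+1) (H - i%:R) = 0 ->
  z * H = (d.+1)%:R *: z -> z = 0.
Proof.
move=> hP hz; have := @eig_right _ _ _ d.+1 hz; rewrite hP mulr0 => /esym/eqP.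
by rewrite scaler_eq0 (negbTE (prod_nz d)) /= => /eqP.
Qed.

Lemma Hcomm (H : A) n : GRing.comm H (\prod_(i < n) (H - i%:R)).
Proof.
apply: commr_prod => i _; apply: commrB; [exact: commr_refl | exact: commr_nat].
Qed.

Lemma Hx_l (H x : A) : H * x - x * H = x -> forall n,
  H * x ^+ n = x ^+ n * H + n%:R *: x ^+ n.
Proof.
move=> hx; have hx' : H * x = x * H + x by rewrite -[X in _ + X]hx addrC subrK.
elim=> [|n IH]; first by rewrite expr0 mulr1 mul1r scale0r addr0.
rewrite exprSr mulrA IH mulrDl -mulrA hx' mulrDr mulrA -exprSr -scalerAl -exprSr.
by rewrite -natr1 scalerDl scale1r -!addrA (addrC (x ^+ n.+1)).
Qed.

Lemma Hx_r (H x : A) : x * H - H * x = x -> forall n,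
  x ^+ n * H = H * x ^+ n + n%:R *: x ^+ n.
Proof.
move=> hx; have hx' : x * H = H * x + x by rewrite -[X in _ + X]hx addrC subrK.
elim=> [|n IH]; first by rewrite expr0 mulr1 mul1r scale0r addr0.
rewrite exprS -mulrA IH mulrDr mulrA hx' mulrDl -mulrA -exprS -scalerAr -exprS.
by rewrite -natr1 scalerDl scale1r -!addrA (addrC (x ^+ n.+1)).
Qed.

Lemma main_l (H x : A) d : H * x - x * H = x ->
  \prod_(i < d.+1) (H - i%:R) = 0 -> forall a, (a <= d.+1)%N ->
  x ^+ a * \prod_(i < d.+1 - a) (H - i%:R) = 0.
Proof.
move=> hx hP; elim=> [_|a IH lt]; first by rewrite subn0 expr0 mul1r.
have lead : (a <= d)%N by [].
have IH' := IH (ltnW lt).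
have eb : (d.+1 - a = (d - a).+1)%N by rewrite subSn.
rewrite subSS; rewrite eb big_ord_recr /= in IH'.
set g := \prod_(i < d - a) (H - i%:R) in IH' *.
have Hg : H * g = g * H by exact: Hcomm.
set w := x ^+ a * g.
have wH : w * H = (d - a)%:R *: w.
  apply/eqP; rewrite -subr_eq0 scaler_nat -mulr_natr -mulrBr /w -mulrA.
  by apply/eqP.
have Hw : H * w = d%:R *: w.
  rewrite /w mulrA Hx_l // mulrDl -scalerAl -mulrA Hg mulrA.
  by rewrite -/w wH -scalerDl -natrD subnK.
have hx' : H * x = x * H + x by rewrite -[X in _ + X]hx addrC subrK.
apply: (@kill_l H _ d hP).
by rewrite exprS -mulrA -/w mulrA hx' mulrDl -mulrA Hw -scalerAr -natr1 scalerDl scale1r.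
Qed.

Lemma main_r (H x : A) d : x * H - H * x = x ->
  \prod_(i < d.+1) (H - i%:R) = 0 -> forall a, (a <= d.+1)%N ->
  \prod_(i < d.+1 - a) (H - i%:R) * x ^+ a = 0.
Proof.
move=> hx hP; elim=> [_|a IH lt]; first by rewrite subn0 expr0 mulr1.
have lead : (a <= d)%N by [].
have IH' := IH (ltnW lt).
have eb : (d.+1 - a = (d - a).+1)%N by rewrite subSn.
rewrite subSS; rewrite eb big_ord_recr /= in IH'.
set g := \prod_(i < d - a) (H - i%:R) in IH' *.
have Hg : H * g = g * H by exact: Hcomm.
set w := g * x ^+ a.
have wH : H * w = (d - a)%:R *: w.
  apply/eqP; rewrite -subr_eq0 scaler_nat -mulr_natl -mulrBl /w mulrA.
  have -> : (H - (d - a)%:R) * g = g * (H - (d - a)%:R) by rewrite mulrBl mulrBr Hg mulr_natl mulr_natr.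
  by apply/eqP.
have Hw : w * H = d%:R *: w.
  rewrite /w -mulrA Hx_r // mulrDr -scalerAr mulrA -Hg -mulrA.
  by rewrite -/w wH -scalerDl -natrD subnK.
have hx' : x * H = H * x + x by rewrite -[X in _ + X]hx addrC subrK.
apply: (@kill_r H _ d hP).
by rewrite exprSr mulrA -/w -mulrA hx' mulrDr mulrA Hw -scalerAl -natr1 scalerDl scale1r.
Qed.

End S.

From mathcomp Require Import ring.

Lemma prodH2 (A : algType rat) d (H1 H2 : A) : H1 + H2 = d%:R ->
  \prod_(i < d.+1) (H1 - i%:R) = 0 -> \prod_(i < d.+1) (H2 - i%:R) = 0.
Proof.
move=> hs hP.
have eH2 : H2 = d%:R - H1 by rewrite -hs addrC addKr.
have step1 : \prod_(i < d.+1) (H2 - i%:R) =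
    horner_alg H1 (\prod_(i < d.+1) ((d%:R - 'X - i%:R) : {poly rat})).
  by rewrite rmorph_prod; apply: eq_bigr => i _; rewrite !rmorphB /= horner_algX !rmorph_nat eH2.
have step2 : \prod_(i < d.+1) ((d%:R - 'X - i%:R) : {poly rat}) =
    (-1) ^+ d.+1 * \prod_(i < d.+1) ('X - i%:R).
  rewrite (reindex_inj rev_ord_inj) /=.
  transitivity (\prod_(i < d.+1) - ('X - (i : nat)%:R : {poly rat})).
    apply: eq_bigr => i _; rewrite subSS natrB; last by rewrite -ltnS ltn_ord.
    ring.
  by rewrite prodrN card_ord.
rewrite step1 step2 rmorphM rmorph_sign rmorph_prod /=.
rewrite (eq_bigr (fun i : 'I_d.+1 => H1 - (i : nat)%:R)) ?hP ?mulr0 // => i _.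
by rewrite rmorphB /= horner_algX rmorph_nat.
Qed.

Theorem lemma4p3 (d : nat) (A : algType rat) (e f H1 H2 : A) :
  B_rels d e f H1 H2 ->
  (forall a b : nat, (a + b = d.+1)%N ->
     [/\ f ^+ a * binom H2 b = 0, binom H2 b * e ^+ a = 0,
         e ^+ a * binom H1 b = 0 & binom H1 b * f ^+ a = 0])
  /\ (e ^+ d.+1 = 0 /\ f ^+ d.+1 = 0).
Proof.
move=> [h12 [h1e [h1f [h2e [h2f [hef [hs hP]]]]]]].
have hP2 := @prodH2 A d H1 H2 hs hP.
have h2e' : e * H2 - H2 * e = e by rewrite -opprB h2e opprK.
have h1f' : f * H1 - H1 * f = f by rewrite -opprB h1f opprK.
have four : forall a b : nat, (a + b = d.+1)%N ->
     [/\ f ^+ a * binom H2 b = 0, binom H2 b * e ^+ a = 0,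
         e ^+ a * binom H1 b = 0 & binom H1 b * f ^+ a = 0].
  move=> a b hab.
  have ha : (a <= d.+1)%N by rewrite -hab leq_addr.
  have eb : b = (d.+1 - a)%N by rewrite -hab addKn.
  rewrite /binom eb; split.
  - by rewrite -scalerAr (@main_l A _ _ d h2f hP2 _ ha) scaler0.
  - by rewrite -scalerAl (@main_r A _ _ d h2e' hP2 _ ha) scaler0.
  - by rewrite -scalerAr (@main_l A _ _ d h1e hP _ ha) scaler0.
  - by rewrite -scalerAl (@main_r A _ _ d h1f' hP _ ha) scaler0.
split => //.
have [h1 _ h3 _] := four d.+1 0%N (addn0 _).
move: h1 h3; rewrite /binom !big_ord0 fact0 invr1 !scale1r !mulr1.
by move=> -> ->.
Qed.
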